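(* Let $\sigma\colon O_1\to O_2$ be an isomorphism of finite $Act$-labelled posets, let $c_1,c_1'$ be causal markings, $K\subseteq|O_1|$, $a\in Act$, $e\in\mathcal{E}\setminus X_{O_1}$ and $e'\in\mathcal{E}\setminus X_{O_2}$. Then $O_1\rhd c_1\xrightarrow{K\vdash e_a}\delta(O_1,K,e_a)\rhd c_1'$ in the concrete causal case graph if and only if $O_2\rhd c_1\sigma\xrightarrow{\sigma(K)\vdash e'_a}\delta(O_2,\sigma(K),e'_a)\rhd c_1'\,\sigma[e_a\mapsto e'_a]$ in the concrete causal case graph.
   Context: Fix a set $Act$ of action labels and an infinite set $\mathcal{E}$ of event names. A finite $Act$-labelled poset is $O=(X_O,\preccurlyeq_O,l_O)$ with $X_O\subseteq\mathcal{E}$ finite, $\preccurlyeq_O$ a partial order on $X_O$ and $l_O\colon X_O\to Act$; write $|O|=\{(x,l_O(x)):x\in X_O\}$, write $x_a$ for $(x,a)$, and regard $O$ also as a poset on $|O|$. A morphism $\sigma\colon O\to O'$ is a map $X_O\to X_{O'}$ preserving order and labels, acting on labelled events by $\sigma(x_a)=\sigma(x)_a$; an isomorphism is a bijective morphism whose inverse is a morphism. For $K\subseteq|O|$, $\max_O K$ is the set of maximal elements of $K$; $K$ is down-closed w.r.t. $O$ if $y\in K$ and $x\preccurlyeq_O y$ imply $x\in K$. A net is $N=(S,T,F,l)$ with disjoint sets $S$ (places) and $T$ (transitions), $F\subseteq(S\times T)\cup(T\times S)$, $l\colon T\to Act$; ${}^\bullet t=\{s:(s,t)\in F\}$ and $t^\bullet=\{s:(t,s)\in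 F\}$ are assumed nonempty. Fix a net $N$. A causal marking is a finite set $c$ of pairs written $K\vdash s$ with $s\in S$ and $K$ a finite subset of $\mathcal{E}\times Act$; $\mathcal{K}(c)$ is the union of all cause sets $K$ in $c$, $|c|$ is the set of places occurring in $c$, and for a set of places $m$, $K\vdash m=\{K\vdash s:s\in m\}$. For a map $\sigma$ on events, $c\sigma=\{\sigma(K)\vdash s: K\vdash s\in c\}$. A P-marking is a pair $O\rhd c$ of a finite labelled poset $O$ and a causal marking $c$ such that every cause set of $c$ is a down-closed subset of $|O|$. For $K\subseteq|O|$, $e\in\mathcal{E}\setminus X_O$, $a\in Act$, $\delta(O,K,e_a)$ is the labelled poset obtained from $O$ by adding the event $e$ with label $a$ and the pairs $k\preccurlyeq e_a$ for $k\in K$, then taking the reflexive-transitive closure. The concrete causal case graph of $N$ is the smallest transition relation on P-markings closed under the rule: if $t\in T$, $O\rhd c\cup c'$ is a P-marking, $|c|={}^\bullet t$, $a=l(t)$, $e\in\mathcal{E}\setminus X_O$ and $K=\max_O\mathcal{K}(c)$, then $O\rhd c\cup c'\xrightarrow{K\vdash e_a}\delta(O,K,e_a)\rhd(\mathcal{K}(c)\cup\{e_a\}\vdash t^\bullet)\cup c'$. For $\sigma\colon O_1\to O_2$ and $e\notin X_{O_1}$, $e'\notin X_{O_2}$, $\sigma[e_a\mapsto e'_a]$ is the map on $X_{O_1}\cup\{e\}$ that agrees with $\sigma$ on $X_{O_1}$ and sends $e$ to $e'$. *)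

(* Defs.v *)
From HB Require Import structures.
From mathcomp Require Import all_boot.
From mathcomp Require Export finmap.
Set Implicit Arguments. Unset Strict Implicit. Unset Printing Implicit Defensive.
Local Open Scope fset_scope.

(* A labelled poset: finite carrier X_O of event names, an order relation
   (meaningful on X_O) and a labelling (meaningful on X_O). *)
Record lposet (E Act : choiceType) := LPoset {
  pX : {fset E};
  ple : E -> E -> bool;
  plab : E -> Act }.

Section Posets.
Variables E Act : choiceType.
Implicit Types (O : lposet E Act).

Definition is_lposet O : Prop :=
  (forall x, x \in pX O -> ple O x x) /\
  (forall x y, x \in pX O -> y \in pX O -> ple O x y -> ple O y x -> x = y) /\
  (forall x y z, x \in pX O -> y \in pX O -> z \in pX O ->
      ple O x y -> ple O y z -> ple O x z).

(* membership in |O| = {(x, l_O x) : x in X_O} *)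
Definition in_levs O (k : E * Act) : bool :=
  (k.1 \in pX O) && (k.2 == plab O k.1).

Definition leL O (k k' : E * Act) : bool := ple O k.1 k'.1.

Definition maxs O (K : {fset E * Act}) : {fset E * Act} :=
  [fset k in K | ~~ has (fun k' => (k' != k) && leL O k k') K].

Definition downclosed O (K : {fset E * Act}) : Prop :=
  (forall k, k \in K -> in_levs O k) /\
  (forall k x, k \in K -> in_levs O x -> leL O x k -> x \in K).

(* delta(O, K, e_a): add e with label a and k <= e_a for k in K,
   then reflexive-transitive closure. *)
Definition delta O (K : {fset E * Act}) (e : E) (a : Act) : lposet E Act :=
  LPoset (e |` pX O)
    (fun x y => if y == e then (x == e) || has (fun k => ple O x k.1) K
                else (x != e) && ple O x y)
    (fun x => if x == e then a else plab O x).

Definition is_morph O1 O2 (f : E -> E) : Prop :=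
  (forall x, x \in pX O1 -> f x \in pX O2) /\
  (forall x y, x \in pX O1 -> y \in pX O1 -> ple O1 x y -> ple O2 (f x) (f y)) /\
  (forall x, x \in pX O1 -> plab O2 (f x) = plab O1 x).

Definition is_iso O1 O2 (f : E -> E) : Prop :=
  is_morph O1 O2 f /\
  exists g : E -> E, is_morph O2 O1 g /\
    (forall x, x \in pX O1 -> g (f x) = x) /\
    (forall y, y \in pX O2 -> f (g y) = y).

Definition lev_map (f : E -> E) (K : {fset E * Act}) : {fset E * Act} :=
  [fset (f k.1, k.2) | k in K].

Definition upd (f : E -> E) (e e' : E) : E -> E :=
  fun x => if x == e then e' else f x.
End Posets.

Record net (S T Act : Type) := Net {
  npre : S -> T -> Prop;   (* (s,t) in F *)
  npost : T -> S -> Prop;  (* (t,s) in F *)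
  nlab : T -> Act }.

Definition net_wf (S T Act : Type) (N : net S T Act) : Prop :=
  forall t, (exists s, npre N s t) /\ (exists s, npost N t s).

Section Markings.
Variables E Act S : choiceType.

Definition cmark := {fset {fset E * Act} * S}.

Definition causes (c : cmark) : {fset E * Act} := (\bigcup_(p <- c) p.1)%fset.
Definition places (c : cmark) : {fset S} := [fset p.2 | p in c].
Definition tok (K : {fset E * Act}) (m : {fset S}) : cmark := [fset (K, s) | s in m].
Definition cmap (f : E -> E) (c : cmark) : cmark :=
  [fset (lev_map f p.1, p.2) | p in c].

Definition pmarking (O : lposet E Act) (c : cmark) : Prop :=
  is_lposet O /\ forall p, p \in c -> downclosed O p.1.
End Markings.

Inductive ccstep (E Act S T : choiceType) (N : net S T Act) :
  lposet E Act -> cmark E Act S -> ({fset E * Act} * E * Act) ->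
  lposet E Act -> cmark E Act S -> Prop :=
| CCStep (t : T) (O : lposet E Act) (c c' : cmark E Act S) (mpost : {fset S}) (e : E) :
    pmarking O (c `|` c') ->
    (forall s, s \in places c <-> npre N s t) ->
    (forall s, s \in mpost <-> npost N t s) ->
    e \notin pX O ->
    ccstep N O (c `|` c') (maxs O (causes c), e, nlab N t)
      (delta O (maxs O (causes c)) e (nlab N t))
      (tok (causes c `|` [fset (e, nlab N t)]) mpost `|` c').

(* Main.v *)
Require Import Defs.
From mathcomp Require Import all_boot finmap.
Set Implicit Arguments. Unset Strict Implicit.
Local Open Scope fset_scope.

Section H.
Variables E Act S : choiceType.
Implicit Types (c : cmark E Act S) (L : {fset E * Act}) (f h : E -> E).

Lemma causesP c k : reflect (exists2 p, p \in c & k \in p.1) (k \in causes c).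
Proof.
rewrite /causes; apply: (iffP (bigfcupP _ _ _ _)) => [[p /andP[pc _] kp]|[p pc kp]]; exists p => //.
by rewrite pc.
Qed.

Lemma causes_cmap f c : causes (cmap f c) = lev_map f (causes c).
Proof.
apply/fsetP=> x; apply/causesP/imfsetP => [[p /imfsetP[q qc ->] /imfsetP[k kq ->]]|].
  by exists k => //; apply/causesP; exists q.
move=> [k /causesP[q qc kq] ->]; exists (lev_map f q.1, q.2).
  by apply/imfsetP; exists q.
by apply/imfsetP; exists k.
Qed.

Lemma cmapU f (c c' : cmark E Act S) : cmap f (c `|` c') = cmap f c `|` cmap f c'.
Proof. by rewrite /cmap /lev_map imfsetU. Qed.

Lemma lev_mapU f (L L' : {fset E * Act}) : lev_map f (L `|` L') = lev_map f L `|` lev_map f L'.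
Proof. by rewrite /cmap /lev_map imfsetU. Qed.

Lemma lev_map1 f (k : E * Act) : lev_map f [fset k] = [fset (f k.1, k.2)].
Proof. by rewrite /lev_map imfset_fset1. Qed.

Lemma cmap_tok f L (m : {fset S}) : cmap f (tok L m) = tok (lev_map f L) m.
Proof.
apply/fsetP=> x; apply/imfsetP/imfsetP => [[p /imfsetP[s sm ->] ->]|[s sm ->]].
  by exists s.
by exists (L, s) => //; apply/imfsetP; exists s.
Qed.

Lemma eq_lev_map f h L : (forall k, k \in L -> f k.1 = h k.1) ->
  lev_map f L = lev_map h L.
Proof. by move=> H; apply: eq_in_imfset => k kL; rewrite /= H. Qed.

Lemma lev_map_id f L : (forall k, k \in L -> f k.1 = k.1) -> lev_map f L = L.
Proof.
move=> H; rewrite /lev_map (@eq_in_imfset _ _ _ _ id) ?imfset_id //.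
by move=> [x y] kL; rewrite /= (H (x, y)).
Qed.

Lemma cmap_id f c : (forall k, k \in causes c -> f k.1 = k.1) -> cmap f c = c.
Proof.
move=> H; rewrite /cmap (@eq_in_imfset _ _ _ _ id) ?imfset_id //.
move=> [L s] pc /=; rewrite lev_map_id // => k kL; apply: H.
by apply/causesP; exists (L, s).
Qed.

Lemma lev_map_comp f h L : lev_map f (lev_map h L) = lev_map (f \o h) L.
Proof. by rewrite /lev_map -imfset_comp. Qed.

Lemma cmap_comp f h c : cmap f (cmap h c) = cmap (f \o h) c.
Proof.
rewrite /cmap -imfset_comp; apply: eq_in_imfset => p _ /=.
by rewrite lev_map_comp.
Qed.

Lemma places_cmap f c : places (cmap f c) = places c.
Proof. by rewrite /places /cmap -imfset_comp. Qed.

Lemma eq_cmap f h c : (forall k, k \in causes c -> f k.1 = h k.1) ->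
  cmap f c = cmap h c.
Proof.
move=> H; apply: eq_in_imfset => -[L s] pc /=; rewrite (@eq_lev_map f h) // => k kL.
by apply: H; apply/causesP; exists (L, s).
Qed.
End H.

Section M.
Variables E Act S : choiceType.
Implicit Types (O : lposet E Act) (c : cmark E Act S) (L : {fset E * Act}) (f h : E -> E).

Lemma iso_inj O1 O2 f : is_iso O1 O2 f -> {in pX O1 &, injective f}.
Proof.
move=> [_ [g [_ [gf _]]]] x y xO yO fxy.
by rewrite -(gf x xO) fxy gf.
Qed.

Lemma maxs_lev_map O1 O2 f L : is_iso O1 O2 f ->
  (forall k, k \in L -> k.1 \in pX O1) ->
  lev_map f (maxs O1 L) = maxs O2 (lev_map f L).
Proof.
move=> Hi HL; have finj := @iso_inj O1 O2 f Hi.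
move: Hi => [[fX [fle flab]] [g [[gX [gle glab]] [gf fg]]]].
apply/fsetP => x; apply/imfsetP/idP.
- move=> [k /= kM ->]; move: kM; rewrite /maxs !inE /= => /andP[kL kM].
  apply/andP; split; first by apply/imfsetP; exists k.
  apply/hasP => -[k' /imfsetP[/= k'' k''L ->] /andP[ne le]].
  move/negP: kM; apply; apply/hasP; exists k'' => //.
  apply/andP; split.
    by apply: contraNneq ne => ->.
  move: le; rewrite /leL /= => le.
  by rewrite -(gf _ (HL _ kL)) -(gf _ (HL _ k''L)) gle ?fX ?HL.
- rewrite /maxs !inE /= => /andP[/imfsetP[/= k kL ->] kM].
  exists k => //=; rewrite !inE /= kL /=.
  apply/hasP => -[k' k'L /andP[ne le]].
  move/negP: kM; apply; apply/hasP; exists (f k'.1, k'.2).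
    by apply/imfsetP; exists k'.
  apply/andP; split.
    apply: contraNneq ne => -[] eq1 eq2.
    have := finj _ _ (HL _ k'L) (HL _ kL) eq1.
    by move: eq2; case: (k') => ? ?; case: (k) => ? ? /= -> ->.
  by rewrite /leL /= fle ?HL.
Qed.

Lemma downclosed_map O1 O2 f L : is_iso O1 O2 f -> downclosed O1 L ->
  downclosed O2 (lev_map f L).
Proof.
move=> [[fX [fle flab]] [g [[gX [gle glab]] [gf fg]]]] [Lin Ldc]; split.
- move=> _ /imfsetP[/= k kL ->]; move: (Lin _ kL); rewrite /in_levs /=.
  by case/andP => kO /eqP ->; rewrite fX // flab // eqxx.
- move=> _ [x y] /imfsetP[/= k kL ->]; rewrite /in_levs /leL /= => /andP[xO /eqP->] le.
  have kO : k.1 \in pX O1 by case/andP: (Lin _ kL).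
  apply/imfsetP; exists (g x, plab O2 x) => /=; last by rewrite fg.
  apply: Ldc kL _ _; rewrite /in_levs /leL /= ?gX //.
    by rewrite glab // eqxx.
  by have := gle _ _ xO (fX _ kO) le; rewrite gf.
Qed.

Lemma pmarking_map O1 O2 f c : is_lposet O2 -> is_iso O1 O2 f ->
  pmarking O1 c -> pmarking O2 (cmap f c).
Proof.
move=> HO2 Hi [_ Hc]; split => // _ /imfsetP[/= p pc ->] /=.
exact: (@downclosed_map O1 O2 f _ Hi (Hc _ pc)).
Qed.
End M.

Lemma fwd_gen (E Act S T : choiceType) (N : net S T Act) (O1 : lposet E Act)
  (c1 : cmark E Act S) l D c1' : ccstep N O1 c1 l D c1' ->
  forall (O2 : lposet E Act) sigma K e a e', is_lposet O2 -> is_iso O1 O2 sigma ->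
  e' \notin pX O2 -> l = (K, e, a) ->
  ccstep N O2 (cmap sigma c1) (lev_map sigma K, e', a)
    (delta O2 (lev_map sigma K) e' a) (cmap (upd sigma e e') c1').
Proof.
case=> t O c c' mpost e0 Hpm Hpre Hpost He0 O2 sigma K e a e' HO2 Hi He' [<- <- <-].
have Hcc : forall k, k \in causes (c `|` c') -> k.1 \in pX O.
  move=> k /causesP[p pc kp]; case: Hpm => _ /(_ p pc) [/(_ k kp) + _].
  by case/andP.
have Hc : forall k, k \in causes c -> k.1 \in pX O.
  move=> k /causesP[p pc kp]; apply: Hcc; apply/causesP; exists p => //.
  by rewrite inE pc.
have Hc' : forall k, k \in causes c' -> k.1 \in pX O.
  move=> k /causesP[p pc kp]; apply: Hcc; apply/causesP; exists p => //.
  by rewrite inE pc orbT.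
have Hupd : forall L : {fset E * Act}, (forall k, k \in L -> k.1 \in pX O) ->
    forall k, k \in L -> upd sigma e0 e' k.1 = sigma k.1.
  move=> L HL k kL; rewrite /upd; case: (k.1 =P e0) => // ek.
  by move: (HL _ kL); rewrite ek (negbTE He0).
rewrite (maxs_lev_map Hi Hc) !cmapU cmap_tok lev_mapU lev_map1 /=.
have -> : upd sigma e0 e' e0 = e' by rewrite /upd eqxx.
rewrite (eq_lev_map (Hupd _ Hc)) (eq_cmap (Hupd _ Hc')) -causes_cmap.
apply: CCStep => //.
- by rewrite -cmapU; apply: pmarking_map Hpm.
- by move=> s; rewrite places_cmap.
Qed.

Theorem lemma1 (E Act S T : choiceType) (N : net S T Act)
  (E_infinite : forall X : {fset E}, exists x, x \notin X)
  (HN : net_wf N)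
  (O1 O2 : lposet E Act) (sigma : E -> E)
  (HO1 : is_lposet O1) (HO2 : is_lposet O2) (Hiso : is_iso O1 O2 sigma)
  (c1 c1' : cmark E Act S) (K : {fset E * Act}) (a : Act) (e e' : E)
  (HK : forall k, k \in K -> in_levs O1 k)
  (He : e \notin pX O1) (He' : e' \notin pX O2)
  (Hc1 : forall k, k \in causes c1 -> k.1 \in pX O1)
  (Hc1' : forall k, k \in causes c1' -> k.1 \in e |` pX O1) :
  ccstep N O1 c1 (K, e, a) (delta O1 K e a) c1' <->
  ccstep N O2 (cmap sigma c1) (lev_map sigma K, e', a)
    (delta O2 (lev_map sigma K) e' a) (cmap (upd sigma e e') c1').
Proof.
split=> st; first exact: (fwd_gen st HO2 Hiso He' (erefl _)).
have Hiso' := Hiso.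
move: Hiso' => [[fX [fle flab]] [g [[gX [gle glab]] [gf fg]]]].
have Hg : is_iso O2 O1 g.
  by split; [split; [|split]|exists sigma; split; [split; [|split]|split]].
have := fwd_gen st HO1 Hg He (erefl _).
rewrite !cmap_comp lev_map_comp lev_map_id; last first.
  by move=> k /HK /andP[kO _] /=; rewrite gf.
rewrite cmap_id; last by move=> k /Hc1 kO /=; rewrite gf.
rewrite cmap_id // => k /Hc1'; rewrite !inE /= /upd.
case: (k.1 =P e) => [-> _|ke /= kO]; first by rewrite eqxx.
have -> : (sigma k.1 == e') = false.
  by apply/negbTE; apply: contraNneq He' => <-; rewrite fX.
by rewrite gf.
Qed.
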